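(* For each instance \(\mathcal{I}\) of 3-SAT, the graph \(G(\mathcal{I})\) constructed below is weakly chordal.
   Context: A graph is weakly chordal if neither it nor its complement contains an induced cycle of length at least 5. Let \(\mathcal{I}\) have variables \(x_1,\dots,x_k\) and clauses \(C_1,\dots,C_l\), each a disjunction of three literals. \(G(\mathcal{I})\) has vertices: literal vertices \(X=\{x_1,\dots,x_k,\overline{x_1},\dots,\overline{x_k}\}\); for each clause \(C_i\) three vertices \(a_i,c_i,t_i\); and four vertices \(r,p,q,u\). Edges: any two vertices of \(X\) are adjacent except the pairs \(x_j\overline{x_j}\); each \(\{a_i,c_i,t_i\}\) is a triangle; \(c_i\) is adjacent to the literal vertices of the literals occurring in \(C_i\); \(r\) is adjacent to every vertex except \(u\) and the \(t_i\); \(u\) is adjacent to every vertex except \(r\) and the \(t_i\); \(p\) is adjacent to every vertex of \(X\) and to \(q\); \(q\) is adjacent to every vertex of \(X\) and to every \(a_i\); there are no other edges. *)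

(* Defs.v *)
From HB Require Import structures.
From mathcomp Require Import all_boot.
Set Implicit Arguments. Unset Strict Implicit. Unset Printing Implicit Defensive.

Definition induced_cycle (V : finType) (e : rel V) (n : nat) (v : 'I_n -> V) :=
  injective v /\
  forall i j : 'I_n,
    e (v i) (v j) = ((j : nat) == (i.+1 %% n)) || ((i : nat) == (j.+1 %% n)).

Definition has_induced_cycle_ge5 (V : finType) (e : rel V) :=
  exists n (v : 'I_n -> V), 5 <= n /\ induced_cycle e v.

Definition compl_rel (V : finType) (e : rel V) : rel V :=
  fun x y => (x != y) && ~~ e x y.

Definition weakly_chordal (V : finType) (e : rel V) :=
  ~ has_induced_cycle_ge5 e /\ ~ has_induced_cycle_ge5 (compl_rel e).

(* A literal over variables x_0..x_{k-1}: (i, true) is x_i, (i, false) is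
   the negation of x_i. *)
Definition literal (k : nat) := ('I_k * bool)%type.

(* An instance with k variables and l clauses; clause j is the disjunction
   of the three literals cl j 0, cl j 1, cl j 2. *)
Record sat3_instance := Sat3 {
  nvars : nat;
  nclauses : nat;
  clause : 'I_nclauses -> 'I_3 -> literal nvars
}.

Definition occurs (I : sat3_instance) (j : 'I_(nclauses I)) (x : literal (nvars I)) :=
  [exists m : 'I_3, @clause I j m == x].

Inductive vertex (k l : nat) :=
| VLit of 'I_k & bool
| VA of 'I_l
| VC of 'I_l
| VT of 'I_l
| VR | VP | VQ | VU.

Arguments VLit {k l}. Arguments VA {k l}. Arguments VC {k l}. Arguments VT {k l}.
Arguments VR {k l}. Arguments VP {k l}. Arguments VQ {k l}. Arguments VU {k l}.

Section VertexFin.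
Variables k l : nat.

Definition vcode (v : vertex k l) : ('I_k * bool) + ('I_3 * 'I_l) + 'I_4 :=
  match v with
  | VLit i b => inl (inl (i, b))
  | VA j => inl (inr (ord0, j))
  | VC j => inl (inr (inord 1, j))
  | VT j => inl (inr (inord 2, j))
  | VR => inr ord0
  | VP => inr (inord 1)
  | VQ => inr (inord 2)
  | VU => inr (inord 3)
  end.

Definition vdecode (c : ('I_k * bool) + ('I_3 * 'I_l) + 'I_4) : option (vertex k l) :=
  match c with
  | inl (inl (i, b)) => Some (VLit i b)
  | inl (inr (m, j)) =>
      match val m with 0 => Some (VA j) | 1 => Some (VC j) | _ => Some (VT j) end
  | inr m =>
      match val m with 0 => Some VR | 1 => Some VP | 2 => Some VQ | _ => Some VU end
  end.

Lemma vcodeK : pcancel vcode vdecode.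
Proof. by case=> //= *; rewrite inordK. Qed.

HB.instance Definition _ := Finite.copy (vertex k l) (pcan_type vcodeK).
End VertexFin.

(* One-directional description of the edges, exactly as listed in the
   construction; the edge relation is its symmetric, irreflexive closure. *)
Definition base_adj (I : sat3_instance) (x y : vertex (nvars I) (nclauses I)) : bool :=
  match x, y with
  | VLit i _, VLit i' _ => i != i'
  | VA j, VC j' | VA j, VT j' | VC j, VT j' => j == j'
  | VC j, VLit i b => @occurs I j (i, b)
  | VR, VU | VR, VT _ => false
  | VR, _ => true
  | VU, VR | VU, VT _ => false
  | VU, _ => true
  | VP, VLit _ _ | VP, VQ => true
  | VQ, VLit _ _ | VQ, VA _ => true
  | _, _ => false
  end.

Definition G_adj (I : sat3_instance) : rel (vertex (nvars I) (nclauses I)) :=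
  fun x y => (x != y) && (base_adj x y || base_adj y x).
Arguments G_adj : clear implicits.

(* Main.v *)
Require Import Defs.
From mathcomp Require Import all_boot.
Set Implicit Arguments. Unset Strict Implicit. Unset Printing Implicit Defensive.


Section Glue.
Variables (T : finType) (e : rel T) (n : nat) (v : 'I_n -> T).
Hypothesis n5 : 4 < n.
Hypothesis Hc : induced_cycle e v.

Let n_pos : 0 < n. Proof. exact: leq_ltn_trans n5. Qed.
Definition wv (m : nat) : T := v (Ordinal (ltn_pmod m n_pos)).

Lemma wvE m m' : m %% n = m' %% n -> wv m = wv m'.
Proof. by move=> h; rewrite /wv; congr v; apply: val_inj; rewrite /= h. Qed.

Lemma wv_e m d : e (wv m) (wv (m + d)) = (d %% n == 1 %% n) || (0 == (d + 1) %% n).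
Proof.
case: Hc => _ H; rewrite H /=.
rewrite -[(m %% n).+1]addn1 -[((m + d) %% n).+1]addn1 !modnDml eqn_modDl; congr orb.
by rewrite -{1}(addn0 m) -!addnA eqn_modDl mod0n.
Qed.

Lemma wv_inj m d : 0 < d < 5 -> wv (m + d) != wv m.
Proof.
case/andP=> d0 d5; apply/negP => /eqP h.
case: Hc => inj _; move/inj: h => /(congr1 val) /= /eqP.
rewrite -{2}(addn0 m) eqn_modDl mod0n modn_small; first by rewrite eqn0Ngt d0.
by apply: (leq_trans d5).
Qed.

Lemma wv_back m : exists m', wv m = wv m'.+1.
Proof.
exists (m + n.-1); apply: wvE; rewrite -addnS prednK //.
by rewrite modnDr.
Qed.

Lemma wv_1 m : e (wv m) (wv m.+1).
Proof. by rewrite -addn1 wv_e eqxx. Qed.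
Lemma wv_2 m : e (wv m) (wv m.+2) = false.
Proof.
rewrite -addn2 wv_e !modn_small //; by apply: (leq_trans _ n5).
Qed.
Lemma wv_3 m : e (wv m) (wv m.+3) = false.
Proof.
rewrite -addn3 wv_e !modn_small //; by apply: (leq_trans _ n5).
Qed.
Lemma wv_i1 m : wv m.+1 != wv m. Proof. by rewrite -addn1 wv_inj. Qed.
Lemma wv_i2 m : wv m.+2 != wv m. Proof. by rewrite -addn2 wv_inj. Qed.
Lemma wv_i3 m : wv m.+3 != wv m. Proof. by rewrite -addn3 wv_inj. Qed.
Lemma wv_i4 m : wv m.+4 != wv m. Proof. by rewrite -addn4 wv_inj. Qed.
End Glue.

Section G.
Variable I : sat3_instance.
Local Notation V := (vertex (nvars I) (nclauses I)).

Definition adj (x y : V) : bool :=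
  match x, y with
  | VLit i _, VLit i' _ => i != i'
  | VA j, VC j' | VA j, VT j' | VC j, VT j' => j == j'
  | VC j, VA j' | VT j, VA j' | VT j, VC j' => j' == j
  | VC j, VLit i b => @occurs I j (i, b)
  | VLit i b, VC j => @occurs I j (i, b)
  | VR, VU | VU, VR | VR, VR | VU, VU => false
  | VR, VT _ | VT _, VR | VU, VT _ | VT _, VU => false
  | VR, _ | _, VR | VU, _ | _, VU => true
  | VP, VLit _ _ | VLit _ _, VP | VP, VQ | VQ, VP => true
  | VQ, VLit _ _ | VLit _ _, VQ | VQ, VA _ | VA _, VQ => true
  | _, _ => false
  end.

Lemma veqE (x y : V) : (x == y) = (vcode x == vcode y).
Proof. by rewrite (inj_eq (pcan_inj (@vcodeK _ _))). Qed.

Lemma G_adjE x y : G_adj I x y = adj x y.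
Proof.
rewrite /G_adj.
case: x => [i b|j|j|j||||]; case: y => [i' b'|j'|j'|j'||||] /=;
  rewrite ?eqxx ?orbF ?andbF //=;
  try (by case: eqP);
  by case: eqP => [[-> _]|_] /=; rewrite ?eqxx // (eq_sym i') orbb.
Qed.

Lemma eqLit i b i' b' : ((VLit i b : V) == VLit i' b') = (i == i') && (b == b').
Proof. by apply/eqP/andP => [[-> ->]|[/eqP-> /eqP->]]. Qed.
Lemma eqA j j' : ((VA j : V) == VA j') = (j == j').
Proof. by apply/eqP/eqP => [[]|->]. Qed.
Lemma eqC j j' : ((VC j : V) == VC j') = (j == j').
Proof. by apply/eqP/eqP => [[]|->]. Qed.
Lemma eqT j j' : ((VT j : V) == VT j') = (j == j').
Proof. by apply/eqP/eqP => [[]|->]. Qed.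

Definition isT (v : V) := if v is VT _ then true else false.
Definition isR (v : V) := if v is VR then true else false.
Definition isU (v : V) := if v is VU then true else false.
Definition isP (v : V) := if v is VP then true else false.
Definition isQ (v : V) := if v is VQ then true else false.
Definition isA (v : V) := if v is VA _ then true else false.
Definition isC (v : V) := if v is VC _ then true else false.

Ltac fin := rewrite ?eqLit ?eqA ?eqC ?eqT ?negbK /=; intros;
  repeat match goal with
  | H : is_true (?a == ?b) |- _ => move/eqP: H => H; subst
  | H : is_true (_ && _) |- _ => case/andP: H => ? ?
  end;
  repeat match goal with
  | H : is_true (~~ (?a == ?a)) |- _ => by rewrite eqxx in H
  | H : is_true (?a != ?a) |- _ => by rewrite eqxx in H
  end;
  repeat match goal with H : is_true _ |- _ => revert H end;
  repeat match goal with b : bool |- _ => revert b end;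
  rewrite ?eqxx /=;
  try by do ! case.

Section Hole.
Variable w : nat -> V.
Hypothesis A1 : forall m, adj (w m) (w m.+1).
Hypothesis N2 : forall m, ~~ adj (w m) (w m.+2).
Hypothesis N3 : forall m, ~~ adj (w m) (w m.+3).
Hypothesis I1 : forall m, w m.+1 != w m.
Hypothesis I2 : forall m, w m.+2 != w m.
Hypothesis I3 : forall m, w m.+3 != w m.
Hypothesis I4 : forall m, w m.+4 != w m.
Hypothesis Back : forall m, exists m', w m = w m'.+1.

Lemma shift (P : V -> bool) : (forall m, P (w m.+1)) -> forall m, P (w m).
Proof. by move=> H m; case: (Back m) => m' ->. Qed.

Lemma hole_noT m : ~~ isT (w m).
Proof.
move: m; apply: (@shift (fun v => ~~ isT v)) => m; move: (A1 m) (A1 m.+1) (N2 m) (I2 m).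
case: (w m.+1) => // s; case: (w m) => // s0; case: (w m.+2) => // s2; fin.
Qed.

Lemma hole_noR m : ~~ isR (w m).
Proof.
move: (N2 m) (N3 m) (hole_noT m.+2) (hole_noT m.+3) (I1 m.+2) (I2 m) (I3 m).
case: (w m) => //; case: (w m.+2) => [??|?|?|?||||] //; case: (w m.+3) => [??|?|?|?||||] //; fin.
Qed.

Lemma hole_noU m : ~~ isU (w m).
Proof.
move: (N2 m) (N3 m) (hole_noT m.+2) (hole_noT m.+3) (I1 m.+2) (I2 m) (I3 m).
case: (w m) => //; case: (w m.+2) => [??|?|?|?||||] //; case: (w m.+3) => [??|?|?|?||||] //; fin.
Qed.

Lemma hole_noP m : ~~ isP (w m).
Proof.
move: m; apply: (@shift (fun v => ~~ isP v)) => m.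
move: (A1 m) (A1 m.+1) (N2 m) (N2 m.+1) (A1 m.+2) (A1 m.+3) (A1 m.+4) (N2 m.+2) (N2 m.+3) (N3 m.+1) (N3 m.+2)
  (I2 m.+1) (I2 m.+3)
  (hole_noT m) (hole_noR m) (hole_noU m) (hole_noT m.+2) (hole_noR m.+2) (hole_noU m.+2)
  (hole_noT m.+3) (hole_noR m.+3) (hole_noU m.+3) (hole_noT m.+4) (hole_noR m.+4) (hole_noU m.+4)
  (hole_noT m.+4.+1) (hole_noR m.+4.+1) (hole_noU m.+4.+1).
case: (w m.+1) => //; case: (w m) => [??|?|?|?||||] //; case: (w m.+2) => [??|?|?|?||||] //;
case: (w m.+3) => [??|?|?|?||||] //; case: (w m.+4) => [??|?|?|?||||] //; case: (w m.+4.+1) => [??|?|?|?||||] //; fin.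
Qed.

Lemma hole_noQ m : ~~ isQ (w m).
Proof.
move: (N2 m) (N3 m) (A1 m.+2) (hole_noT m.+2) (hole_noR m.+2) (hole_noU m.+2) (hole_noP m.+2) (hole_noT m.+3) (hole_noR m.+3) (hole_noU m.+3) (hole_noP m.+3).
case: (w m) => [??|?|?|?||||] //; case: (w m.+2) => [??|?|?|?||||] //; case: (w m.+3) => [??|?|?|?||||] //; fin.
Qed.

Lemma hole_noA m : ~~ isA (w m).
Proof.
move: m; apply: (@shift (fun v => ~~ isA v)) => m.
move: (A1 m) (A1 m.+1) (I2 m) (hole_noT m) (hole_noR m) (hole_noU m) (hole_noP m) (hole_noQ m) (hole_noT m.+2) (hole_noR m.+2) (hole_noU m.+2) (hole_noP m.+2) (hole_noQ m.+2).
case: (w m.+1) => [??|?|?|?||||] //; case: (w m) => [??|?|?|?||||] //; case: (w m.+2) => [??|?|?|?||||] //; fin.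
Qed.

Lemma hole_noC m : ~~ isC (w m).
Proof.
move: m; apply: (@shift (fun v => ~~ isC v)) => m.
move: (A1 m) (A1 m.+1) (N2 m) (A1 m.+2) (N2 m.+1) (N3 m) (A1 m.+3) (N2 m.+2) (I2 m) (I2 m.+2) (I4 m)
  (hole_noT m) (hole_noR m) (hole_noU m) (hole_noP m) (hole_noQ m) (hole_noA m) (hole_noT m.+2) (hole_noR m.+2) (hole_noU m.+2) (hole_noP m.+2) (hole_noQ m.+2) (hole_noA m.+2) (hole_noT m.+3) (hole_noR m.+3) (hole_noU m.+3) (hole_noP m.+3) (hole_noQ m.+3) (hole_noA m.+3) (hole_noT m.+4) (hole_noR m.+4) (hole_noU m.+4) (hole_noP m.+4) (hole_noQ m.+4) (hole_noA m.+4).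
case: (w m.+1) => [??|?|?|?||||] //; case: (w m) => [??|?|?|?||||] //; case: (w m.+2) => [??|?|?|?||||] //; case: (w m.+3) => [??|?|?|?||||] //; case: (w m.+4) => [??|?|?|?||||] //; fin.
Qed.

Lemma hole_false : False.
Proof.
move: (A1 0) (A1 1) (A1 2) (N2 0) (N2 1) (N3 0)
  (hole_noT 0) (hole_noR 0) (hole_noU 0) (hole_noP 0) (hole_noQ 0) (hole_noA 0) (hole_noC 0) (hole_noT 1) (hole_noR 1) (hole_noU 1) (hole_noP 1) (hole_noQ 1) (hole_noA 1) (hole_noC 1) (hole_noT 2) (hole_noR 2) (hole_noU 2) (hole_noP 2) (hole_noQ 2) (hole_noA 2) (hole_noC 2) (hole_noT 3) (hole_noR 3) (hole_noU 3) (hole_noP 3) (hole_noQ 3) (hole_noA 3) (hole_noC 3).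
case: (w 0) => [??|?|?|?||||] //; case: (w 1) => [??|?|?|?||||] //; case: (w 2) => [??|?|?|?||||] //; case: (w 3) => [??|?|?|?||||] //; fin.
Qed.

End Hole.
Section AntiHole.
Variable w : nat -> V.
Hypothesis B1 : forall m, ~~ adj (w m) (w m.+1).
Hypothesis B2 : forall m, adj (w m) (w m.+2).
Hypothesis B3 : forall m, adj (w m) (w m.+3).
Hypothesis I1 : forall m, w m.+1 != w m.
Hypothesis I2 : forall m, w m.+2 != w m.
Hypothesis Back : forall m, exists m', w m = w m'.+1.

Lemma ashift (P : V -> bool) : (forall m, P (w m.+1)) -> forall m, P (w m).
Proof. by move=> H m; case: (Back m) => m' ->. Qed.

Lemma ah_noT m : ~~ isT (w m).
Proof.
move: (B2 m) (B3 m) (B1 m.+2) (I1 m.+2).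
case: (w m) => [??|?|?|?||||] //; case: (w m.+2) => [??|?|?|?||||] //; case: (w m.+3) => [??|?|?|?||||] //; fin.
Qed.

Lemma ah_noR m : ~~ isR (w m).
Proof.
move: m; apply: (@ashift (fun v => ~~ isR v)) => m.
move: (B1 m) (B1 m.+1) (I1 m) (I2 m) (I1 m.+1) (ah_noT m) (ah_noT m.+2).
case: (w m.+1) => [??|?|?|?||||] //; case: (w m) => [??|?|?|?||||] //; case: (w m.+2) => [??|?|?|?||||] //; fin.
Qed.

Lemma ah_noU m : ~~ isU (w m).
Proof.
move: m; apply: (@ashift (fun v => ~~ isU v)) => m.
move: (B1 m) (B1 m.+1) (I1 m) (I2 m) (I1 m.+1) (ah_noT m) (ah_noT m.+2).
case: (w m.+1) => [??|?|?|?||||] //; case: (w m) => [??|?|?|?||||] //; case: (w m.+2) => [??|?|?|?||||] //; fin.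
Qed.

Lemma ah_noA m : ~~ isA (w m).
Proof.
move: (B2 m) (B3 m) (B1 m.+2) (I1 m.+2) (B1 m.+3) (B2 m.+2) (B1 m) (B1 m.+1) (B2 m.+1)
  (ah_noT m.+1) (ah_noR m.+1) (ah_noU m.+1) (ah_noT m.+2) (ah_noR m.+2) (ah_noU m.+2) (ah_noT m.+3) (ah_noR m.+3) (ah_noU m.+3) (ah_noT m.+4) (ah_noR m.+4) (ah_noU m.+4).
case: (w m) => [??|?|?|?||||] //; case: (w m.+2) => [??|?|?|?||||] //; case: (w m.+3) => [??|?|?|?||||] //; case: (w m.+1) => [??|?|?|?||||] //; case: (w m.+4) => [??|?|?|?||||] //; fin.
Qed.

Lemma ah_noQ m : ~~ isQ (w m).
Proof.
move: m; apply: (@ashift (fun v => ~~ isQ v)) => m.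
move: (B1 m) (B1 m.+1) (B2 m) (ah_noT m) (ah_noR m) (ah_noU m) (ah_noA m) (ah_noT m.+2) (ah_noR m.+2) (ah_noU m.+2) (ah_noA m.+2).
case: (w m.+1) => [??|?|?|?||||] //; case: (w m) => [??|?|?|?||||] //; case: (w m.+2) => [??|?|?|?||||] //; fin.
Qed.

Lemma ah_noP m : ~~ isP (w m).
Proof.
move: m; apply: (@ashift (fun v => ~~ isP v)) => m.
move: (B1 m) (B1 m.+1) (B2 m) (ah_noT m) (ah_noR m) (ah_noU m) (ah_noA m) (ah_noQ m) (ah_noT m.+2) (ah_noR m.+2) (ah_noU m.+2) (ah_noA m.+2) (ah_noQ m.+2).
case: (w m.+1) => [??|?|?|?||||] //; case: (w m) => [??|?|?|?||||] //; case: (w m.+2) => [??|?|?|?||||] //; fin.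
Qed.

Lemma ah_noC m : ~~ isC (w m).
Proof.
move: (B2 m) (B3 m) (B1 m.+2) (B1 m.+1) (B2 m.+1) (B3 m.+1) (B1 m.+3) (B2 m.+2)
  (ah_noT m.+1) (ah_noR m.+1) (ah_noU m.+1) (ah_noA m.+1) (ah_noQ m.+1) (ah_noP m.+1) (ah_noT m.+2) (ah_noR m.+2) (ah_noU m.+2) (ah_noA m.+2) (ah_noQ m.+2) (ah_noP m.+2) (ah_noT m.+3) (ah_noR m.+3) (ah_noU m.+3) (ah_noA m.+3) (ah_noQ m.+3) (ah_noP m.+3) (ah_noT m.+4) (ah_noR m.+4) (ah_noU m.+4) (ah_noA m.+4) (ah_noQ m.+4) (ah_noP m.+4).
case: (w m) => [??|?|?|?||||] //; case: (w m.+2) => [??|?|?|?||||] //; case: (w m.+3) => [??|?|?|?||||] //; case: (w m.+1) => [??|?|?|?||||] //; case: (w m.+4) => [??|?|?|?||||] //; fin.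
Qed.

Lemma ah_false : False.
Proof.
move: (B1 0) (B1 1) (B2 0) (ah_noT 0) (ah_noR 0) (ah_noU 0) (ah_noP 0) (ah_noQ 0) (ah_noA 0) (ah_noC 0) (ah_noT 1) (ah_noR 1) (ah_noU 1) (ah_noP 1) (ah_noQ 1) (ah_noA 1) (ah_noC 1) (ah_noT 2) (ah_noR 2) (ah_noU 2) (ah_noP 2) (ah_noQ 2) (ah_noA 2) (ah_noC 2).
case: (w 0) => [??|?|?|?||||] //; case: (w 1) => [??|?|?|?||||] //; case: (w 2) => [??|?|?|?||||] //; fin.
Qed.
End AntiHole.


Lemma no_hole : ~ has_induced_cycle_ge5 (G_adj I).
Proof.
case=> n [v [n5 Hc]].
apply: (@hole_false (wv v n5)).
- by move=> m; rewrite -G_adjE (wv_1 n5 Hc).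
- by move=> m; rewrite -G_adjE (wv_2 n5 Hc).
- by move=> m; rewrite -G_adjE (wv_3 n5 Hc).
- exact: wv_i1 Hc.
- exact: wv_i2 Hc.
- exact: wv_i3 Hc.
- exact: wv_i4 Hc.
- exact: wv_back.
Qed.

Lemma no_antihole : ~ has_induced_cycle_ge5 (compl_rel (G_adj I)).
Proof.
case=> n [v [n5 Hc]].
apply: (@ah_false (wv v n5)).
- by move=> m; move: (wv_1 n5 Hc m); rewrite /compl_rel G_adjE => /andP[].
- by move=> m; move: (wv_2 n5 Hc m); rewrite /compl_rel G_adjE eq_sym (wv_i2 n5 Hc) /= => /negbFE.
- by move=> m; move: (wv_3 n5 Hc m); rewrite /compl_rel G_adjE eq_sym (wv_i3 n5 Hc) /= => /negbFE.
- exact: wv_i1 Hc.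
- exact: wv_i2 Hc.
- exact: wv_back.
Qed.
End G.

Theorem lemma8 (I : sat3_instance) : weakly_chordal (G_adj I).
Proof. split; [exact: no_hole | exact: no_antihole]. Qed.
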